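(* Let $n,m\ge 1$, let $A=(a_1,\ldots,a_m)$ be a real $n\times m$ matrix with $a_i\neq 0$ for all $i$, and let $b=(b_1,\ldots,b_m)^\top\in\mathbb{R}^m$ be such that $K=\{x\in\mathbb{R}^n \mid A^\top x\le b\}$ is nonempty. For $\varepsilon>0$ put $b_i(\varepsilon)=b_i+\varepsilon^i$ ($\varepsilon$ to the power $i$), $H_i(\varepsilon)=\{x\in\mathbb{R}^n\mid a_i^\top x\le b_i(\varepsilon)\}$, $\partial H_i(\varepsilon)=\{x\in\mathbb{R}^n\mid a_i^\top x= b_i(\varepsilon)\}$, $K(\varepsilon)=\bigcap_{i=1}^m H_i(\varepsilon)$, $F_i(\varepsilon)=\partial H_i(\varepsilon)\cap K(\varepsilon)$, and $\mathcal{F}(\varepsilon)=\{J\subseteq\{1,\ldots,m\}\mid J\neq\emptyset,\ \bigcap_{i\in J}F_i(\varepsilon)\neq\emptyset\}$. Then there exists $\delta>0$ such that for all $\varepsilon\in(0,\delta)$: (i) the family of hyperplanes $\{\partial H_i(\varepsilon)\mid i=1,\ldots,m\}$ is in general position; and (ii) $\mathcal{F}(\varepsilon)$ does not depend on $\varepsilon$; writing $\mathcal{F}(0+)$ for this common value, $\mathcal{F}(0+)$ is a simplicial complex.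
   Context: A finite set of $m$ hyperplanes $\{P_i\subset\mathbb{R}^n\mid i=1,\ldots,m\}$ is said to be in general position if there is no $J\subseteq\{1,\ldots,m\}$ such that $\bigcap_{i\in J}P_i$ contains an affine subspace of dimension $\max\{n+1-|J|,0\}$. A simplicial complex here means an abstract simplicial complex on the vertex set $\{1,\ldots,m\}$: a family of nonempty subsets closed under taking nonempty subsets. *)

(* Defs.v *)
From HB Require Import structures.
From mathcomp Require Import all_boot all_order all_algebra.
From mathcomp Require Export reals.
Set Implicit Arguments. Unset Strict Implicit. Unset Printing Implicit Defensive.
Import Order.TTheory GRing.Theory Num.Theory.
Local Open Scope ring_scope.

(* The i-th column of A : 'M_(n,m)
   is a_i, and  a_i^T x  is  (x *m col i A) 0 0. Indices i : 'I_m are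
   0-based, so the paper's index i corresponds to the ordinal i-1. *)

Section Defs.
Variable R : realFieldType.

Definition lin (n m : nat) (A : 'M[R]_(n, m)) (i : 'I_m) (x : 'rV[R]_n) : R :=
  (x *m col i A) 0 0.

Definition contains_affine (n : nat) (S : 'rV[R]_n -> Prop) (d : nat) : Prop :=
  exists (x0 : 'rV[R]_n) (V : 'M[R]_(d, n)),
    row_free V /\ forall c : 'rV[R]_d, S (x0 + c *m V).

Definition general_position (n m : nat) (P : 'I_m -> 'rV[R]_n -> Prop) : Prop :=
  ~ exists J : {set 'I_m},
      contains_affine (fun x => forall i, i \in J -> P i x) (maxn (n.+1 - #|J|) 0).

(* b_i(eps) = b_i + eps^i, with the paper's 1-based index i *)
Definition beps (m : nat) (b : 'cV[R]_m) (eps : R) (i : 'I_m) : R :=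
  b i 0 + eps ^+ i.+1.

Definition bdH (n m : nat) (A : 'M[R]_(n, m)) (b : 'cV[R]_m) (eps : R)
  (i : 'I_m) (x : 'rV[R]_n) : Prop := lin A i x = beps b eps i.

Definition Keps (n m : nat) (A : 'M[R]_(n, m)) (b : 'cV[R]_m) (eps : R)
  (x : 'rV[R]_n) : Prop := forall i, lin A i x <= beps b eps i.

Definition Feps (n m : nat) (A : 'M[R]_(n, m)) (b : 'cV[R]_m) (eps : R)
  (i : 'I_m) (x : 'rV[R]_n) : Prop := bdH A b eps i x /\ Keps A b eps x.

Definition in_face_family (n m : nat) (A : 'M[R]_(n, m)) (b : 'cV[R]_m)
  (eps : R) (J : {set 'I_m}) : Prop :=
  J != set0 /\ exists x : 'rV[R]_n, forall i, i \in J -> Feps A b eps i x.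

End Defs.

Definition simplicial_complex (m : nat) (F : {set {set 'I_m}}) : Prop :=
  forall J : {set 'I_m}, J \in F -> J != set0 /\
    forall J' : {set 'I_m}, J' \subset J -> J' != set0 -> J' \in F.

(* Main.v *)
Require Import Defs.
From HB Require Import structures.
From mathcomp Require Import all_boot all_order all_algebra.
From mathcomp Require Import reals.
From mathcomp Require Import ring lra zify.
From Stdlib Require Import Classical ClassicalEpsilon FunctionalExtensionality.
Import Order.TTheory GRing.Theory Num.Theory.
Local Open Scope ring_scope.
Set Implicit Arguments. Unset Strict Implicit.

Section Aux.
Variable R : rcfType.

Lemma In_mem (T : eqType) (x : T) (s : seq T) : List.In x s <-> x \in s.
Proof.
elim: s => [|y s IH] //=; rewrite in_cons; split.
  by case=> [->|/IH ->]; rewrite ?eqxx ?orbT.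
by case/orP=> [/eqP ->|/IH]; [left|right].
Qed.

Definition mono (G : R -> Prop) := forall d d', 0 < d' -> d' <= d -> G d -> G d'.

Lemma fin_delta (T : finType) (G : T -> R -> Prop) :
  (forall t, mono (G t)) -> (forall t, exists d, 0 < d /\ G t d) ->
  exists d, 0 < d /\ forall t, G t d.
Proof.
move=> Hm Hd.
suff: forall s : seq T, exists d, 0 < d /\ forall t, t \in s -> G t d.
  by case/(_ (enum T)) => d [d0 Hs]; exists d; split => // t; apply: Hs; rewrite mem_enum.
elim=> [|t s [d [d0 Hs]]]; first by exists 1; split.
have [d1 [d10 H1]] := Hd t.
exists (Num.min d d1); split; first by rewrite lt_min d0 d10.
move=> u; rewrite in_cons => /orP [/eqP ->|us].
  by apply: (Hm t d1) => //; [rewrite lt_min d0 d10 | rewrite ge_min lexx orbT].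
by apply: (Hm u d) => //; [rewrite lt_min d0 d10 | rewrite ge_min lexx | apply: Hs].
Qed.

Lemma no_root_near0 (p : {poly R}) : p != 0 ->
  exists d, 0 < d /\ forall e, 0 < e -> e < d -> ~~ root p e.
Proof.
move=> p0; apply: NNPP => Hn.
have Hr : forall d, 0 < d -> exists e, [/\ 0 < e, e < d & root p e].
  move=> d d0; apply: NNPP => He; apply: Hn; exists d; split => // e e0 ed.
  by apply/negP => re; apply: He; exists e.
suff: forall k, exists rs : seq R, [/\ size rs = k, uniq rs, all (root p) rs & all (fun x => 0 < x) rs].
  case/(_ (size p)) => rs [sz u ar _].
  by have := max_poly_roots p0 ar u; rewrite sz ltnn.
elim=> [|k [rs [sz u ar ap]]]; first by exists [::].
have [d [d0 dle]] : exists d, 0 < d /\ forall x, x \in rs -> d <= x.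
  elim: rs {sz u ar} ap => [|x rs IH] /=; first by exists 1.
  case/andP => x0 /IH [d [d0 h]]; exists (Num.min x d); split.
    by rewrite lt_min x0 d0.
  move=> y; rewrite in_cons => /orP [/eqP ->|/h hy]; first by rewrite ge_min lexx.
  by rewrite ge_min hy orbT.
have [e [e0 ed re]] := Hr d d0.
exists (e :: rs); split => /=; first by rewrite sz.
- rewrite u andbT; apply/negP => /dle; rewrite leNgt ed //.
- by rewrite re ar.
- by rewrite e0 ap.
Qed.

Lemma sign_const (p : {poly R}) :
  exists d, 0 < d /\ forall e1 e2, 0 < e1 -> e1 < d -> 0 < e2 -> e2 < d ->
     (0 <= p.[e1] -> 0 <= p.[e2]).
Proof.
have [->|p0] := eqVneq p 0.
  by exists 1; split => // *; rewrite horner0.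
have [d [d0 Hd]] := @no_root_near0 p p0.
exists d; split => // e1 e2 e10 e1d e20 e2d h1.
rewrite leNgt; apply/negP => h2.
have h1' : 0 < p.[e1] by rewrite lt_def h1 andbT; have := Hd e1 e10 e1d; rewrite rootE.
have [le12|lt21] := leP e1 e2.
  have [|x /andP [x1 x2] rx] := @poly_ivt R (- p) e1 e2 le12.
    by rewrite !hornerN oppr_le0 oppr_ge0 (ltW h1') (ltW h2).
  suff : ~~ root p x by rewrite -rootN rx.
  by apply: Hd; [exact: lt_le_trans x1 | exact: le_lt_trans x2 _].
have [|x /andP [x1 x2] rx] := @poly_ivt R p e2 e1 (ltW lt21).
  by rewrite (ltW h1') (ltW h2).
suff : ~~ root p x by rewrite rx.
by apply: Hd; [exact: lt_le_trans x1 | exact: le_lt_trans x2 _].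
Qed.


Definition evc (P : R -> Prop) := exists d, 0 < d /\
  forall e1 e2, 0 < e1 -> e1 < d -> 0 < e2 -> e2 < d -> P e1 -> P e2.

Lemma evc_ext (P Q : R -> Prop) : (forall e, P e <-> Q e) -> evc P -> evc Q.
Proof.
move=> H [d [d0 Hd]]; exists d; split => // e1 e2 ? ? ? ? /H h; apply/H.
exact: (Hd e1).
Qed.

Lemma evc_and (P Q : R -> Prop) : evc P -> evc Q -> evc (fun e => P e /\ Q e).
Proof.
move=> [d [d0 Hd]] [d' [d0' Hd']]; exists (Num.min d d'); split.
  by rewrite lt_min d0 d0'.
move=> e1 e2 e10; rewrite !lt_min => /andP [e1d e1d'] e20 /andP [e2d e2d'] [h1 h2].
by split; [apply: (Hd e1) | apply: (Hd' e1)].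
Qed.

Definition dot n (x c : 'I_n -> R) := \sum_j x j * c j.
Definition satl n (e : R) (x : 'I_n -> R) (s : seq (('I_n -> R) * {poly R})) :=
  forall k, List.In k s -> dot x k.1 <= k.2.[e].

Definition tl n (c : 'I_n.+1 -> R) : 'I_n -> R := fun j => c (lift ord0 j).

Definition fm n (s : seq (('I_n.+1 -> R) * {poly R})) : seq (('I_n -> R) * {poly R}) :=
  List.app (List.map (fun k => (tl k.1, k.2)) (List.filter (fun k => k.1 ord0 == 0) s))
  (List.flat_map (fun p => List.map (fun q =>
      ((fun j => - q.1 ord0 * tl p.1 j + p.1 ord0 * tl q.1 j),
       (- q.1 ord0) *: p.2 + p.1 ord0 *: q.2))
     (List.filter (fun k => k.1 ord0 < 0) s))
   (List.filter (fun k => 0 < k.1 ord0) s)).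

Lemma dot_split n (x c : 'I_n.+1 -> R) : dot x c = x ord0 * c ord0 + dot (tl x) (tl c).
Proof. by rewrite /dot big_ord_recl. Qed.

Lemma dot_lin n (y f g : 'I_n -> R) a b :
  dot y (fun j => a * f j + b * g j) = a * dot y f + b * dot y g.
Proof.
rewrite /dot !mulr_sumr -big_split /=; apply: eq_bigr => j _; ring.
Qed.

Lemma lu_bound (ls us : seq R) : (forall l u, List.In l ls -> List.In u us -> l <= u) ->
  exists t, (forall l, List.In l ls -> l <= t) /\ (forall u, List.In u us -> t <= u).
Proof.
elim: ls => [|l ls IH] H.
  elim: us {H} => [|u us [t [_ Ht]]]; first by exists 0.
  exists (Num.min u t); split => // v /= [<-|/Ht h]; first by rewrite ge_min lexx.
  by rewrite ge_min h orbT.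
have [t [H1 H2]] : exists t, (forall l, List.In l ls -> l <= t) /\ (forall u, List.In u us -> t <= u).
  by apply: IH => l' u hl hu; apply: H => //; right.
exists (Num.max l t); split.
  by move=> l' /= [<-|/H1 h]; rewrite le_max ?lexx // h orbT.
by move=> u hu; rewrite ge_max H2 // andbT; apply: H => //; left.
Qed.

Lemma fm_correct n e (s : seq (('I_n.+1 -> R) * {poly R})) :
  (exists x, satl e x s) <-> (exists y, satl e y (fm s)).
Proof.
split.
  move=> [x Hx]; exists (tl x) => k /List.in_app_iff [].
    move=> /List.in_map_iff [k' [<- /List.filter_In [/Hx h /eqP h0]]] /=.
    by move: h; rewrite dot_split h0 mulr0 add0r.
  move=> /List.in_flat_map [p [/List.filter_In [/Hx hp p0]]].
  move=> /List.in_map_iff [q [<- /List.filter_In [/Hx hq q0]]] /=.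
  rewrite dot_lin hornerD !hornerZ.
  move: hp hq; rewrite !dot_split => hp hq.
  have hq' : 0 <= - q.1 ord0 by rewrite oppr_ge0 ltW.
  have hp' : 0 <= p.1 ord0 by rewrite ltW.
  have := ler_wpM2l hq' hp; have := ler_wpM2l hp' hq.
  move=> h1 h2; have := lerD h2 h1.
  suff -> : - q.1 ord0 * (x ord0 * p.1 ord0 + dot (tl x) (tl p.1)) +
    p.1 ord0 * (x ord0 * q.1 ord0 + dot (tl x) (tl q.1)) =
    - q.1 ord0 * dot (tl x) (tl p.1) + p.1 ord0 * dot (tl x) (tl q.1) by [].
  ring.
move=> [y Hy].
pose P := List.filter (fun k : ('I_n.+1 -> R) * {poly R} => 0 < k.1 ord0) s.
pose N := List.filter (fun k : ('I_n.+1 -> R) * {poly R} => k.1 ord0 < 0) s.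
pose U := fun k : ('I_n.+1 -> R) * {poly R} => (k.2.[e] - dot y (tl k.1)) / k.1 ord0.
have [|t [Ht1 Ht2]] := @lu_bound (List.map U N) (List.map U P).
  move=> l0 u0 /List.in_map_iff [q [<- hq]] /List.in_map_iff [p [<- hp]].
  have := Hy (_, _) (List.in_or_app _ _ _ (or_intror (proj2 (List.in_flat_map _ _ _)
      (ex_intro _ p (conj hp (proj2 (List.in_map_iff _ _ _) (ex_intro _ q (conj erefl hq)))))))).
  move: hp hq => /List.filter_In [_ p0] /List.filter_In [_ q0] /=.
  rewrite dot_lin hornerD !hornerZ /U.
  set a := p.1 ord0; set c := q.1 ord0.
  set u := (p.2.[e] - dot y (tl p.1)) / a.
  set v := (q.2.[e] - dot y (tl q.1)) / c.
  have Eu : p.2.[e] - dot y (tl p.1) = u * a by rewrite /u divfK // gt_eqF.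
  have Ev : q.2.[e] - dot y (tl q.1) = v * c by rewrite /v divfK // lt_eqF.
  move=> h.
  have h' : 0 <= - c * (p.2.[e] - dot y (tl p.1)) + a * (q.2.[e] - dot y (tl q.1)).
    have -> : - c * (p.2.[e] - dot y (tl p.1)) + a * (q.2.[e] - dot y (tl q.1)) =
      (- c * p.2.[e] + a * q.2.[e]) - (- c * dot y (tl p.1) + a * dot y (tl q.1)) by ring.
    by rewrite subr_ge0.
  move: h'; rewrite Eu Ev => h'.
  have : 0 <= (a * - c) * (u - v).
    by have -> : (a * - c) * (u - v) = - c * (u * a) + a * (v * c) by ring.
  by rewrite pmulr_rge0 ?subr_ge0 // mulr_gt0 // oppr_gt0.
pose x := fun j : 'I_n.+1 => if unlift ord0 j is Some j' then y j' else t.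
have x0 : x ord0 = t by rewrite /x unlift_none.
have xt : tl x = y by apply: functional_extensionality => j; rewrite /tl /x liftK.
exists x => k hk; rewrite dot_split x0 xt.
have [k0|k0|k0] := ltgtP (k.1 ord0) 0.
- have hN : List.In k N by apply/List.filter_In; split.
  have := Ht1 (U k) (List.in_map _ _ _ hN); rewrite /U ler_ndivrMr // => h.
  by lra.
- have hP : List.In k P by apply/List.filter_In; split.
  have := Ht2 (U k) (List.in_map _ _ _ hP); rewrite /U ler_pdivlMr // => h.
  by lra.
- rewrite k0 mulr0 add0r.
  apply: (Hy (tl k.1, k.2)); apply: List.in_or_app; left.
  by apply: List.in_map; apply/List.filter_In; rewrite k0 eqxx.
Qed.


Lemma evc_all (s : seq {poly R}) : evc (fun e => forall p, List.In p s -> 0 <= p.[e]).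
Proof.
elim: s => [|p s IH].
  by exists 1; split.
apply: (@evc_ext (fun e => 0 <= p.[e] /\ forall q, List.In q s -> 0 <= q.[e])).
  move=> e; split; first by move=> [h1 h2] q /= [<-|/h2].
  by move=> h; split => [|q hq]; apply: h; [left|right].
by apply: evc_and => //; apply: sign_const.
Qed.

Lemma fm_evc n (s : seq (('I_n -> R) * {poly R})) : evc (fun e => exists x, satl e x s).
Proof.
elim: n s => [|n IH] s.
  apply: (@evc_ext (fun e => forall p, List.In p (List.map snd s) -> 0 <= p.[e])); last first.
    exact: evc_all.
  move=> e; split.
    move=> h; exists (fun _ => 0) => k hk; rewrite /dot big_ord0.
    by apply: h; apply: List.in_map.
  move=> [x hx] p /List.in_map_iff [k [<- hk]].
  by have := hx k hk; rewrite /dot big_ord0.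
apply: (@evc_ext (fun e => exists y, satl e y (fm s))); last exact: IH.
by move=> e; rewrite fm_correct.
Qed.

End Aux.

Section Main.
Variable R : realType.
Variables (n m : nat) (A : 'M[R]_(n, m)) (b : 'cV[R]_m).

Lemma lin_sum i (x : 'rV[R]_n) : lin A i x = \sum_j x 0 j * A j i.
Proof. by rewrite /lin !mxE; apply: eq_bigr => j _; rewrite mxE. Qed.

Definition Pp (i : 'I_m) : {poly R} := (b i 0)%:P + 'X^(i.+1).

Lemma Pp_horner i e : (Pp i).[e] = beps b e i.
Proof. by rewrite /Pp hornerD hornerC hornerXn. Qed.

Lemma dep_of_affine (J : {set 'I_m}) e :
  contains_affine (fun x => forall i, i \in J -> bdH A b e i x) (maxn (n.+1 - #|J|) 0) ->
  exists y : 'I_m -> R, (exists i, y i != 0) /\ (forall i, i \notin J -> y i = 0) /\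
    forall j, \sum_i y i * A j i = 0.
Proof.
move=> [x0 [V [rfV HV]]].
have L : forall r i, i \in J -> \sum_j V r j * A j i = 0.
  move=> r i iJ.
  have h1 := HV (delta_mx 0 r) i iJ; have h0 := HV 0 i iJ.
  rewrite mul0mx addr0 in h0; rewrite /bdH in h0 h1.
  move: h1; rewrite /lin mulmxDl mxE -/(lin A i x0) -rowE.
  rewrite h0 => hh.
  transitivity ((row r V *m col i A) 0 0).
    by rewrite mxE; apply: eq_bigr => j _; rewrite !mxE.
  by apply: (@addrI _ (beps b e i)); rewrite addr0.
pose M : 'M[R]_(n, #|J|) := \matrix_(j, k) A j (enum_val k).
have VM0 : V *m M = 0.
  apply/matrixP => r k; rewrite [RHS]mxE; rewrite mxE.
  transitivity (\sum_j V r j * A j (enum_val k)).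
    by apply: eq_bigr => j _; rewrite mxE.
  exact: L (enum_valP k).
have rk1 := mxrankS (introT sub_kermxP VM0); rewrite mxrank_ker (eqP rfV) in rk1.
have rk2 := rank_leq_row M.
have rkM : (\rank M < #|J|)%N.
  move: rk1 rk2; set k := #|J|; set r := \rank M; move=> h1 h2; have : (n.+1 - k <= n - r)%N by move: h1; rewrite geq_max => /andP [] ->.
  lia.
pose K := kermx M^T.
have Kn0 : K != 0.
  by rewrite -mxrank_eq0 mxrank_ker mxrank_tr; move: rkM; lia.
have [k0 [l0 hkl]] : exists k l, K k l != 0.
  apply: NNPP => h; move/eqP: Kn0; apply; apply/matrixP => k l; rewrite [RHS]mxE.
  by case: (eqVneq (K k l) 0) => // hn; exfalso; apply: h; exists k, l.
have KM0 : K *m M^T = 0 by apply: mulmx_ker.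
clearbody K.
have KM : forall j, \sum_l K k0 l * A j (enum_val l) = 0.
  move=> j; move/matrixP/(_ k0 j): KM0; rewrite !mxE => h.
  transitivity (\sum_l K k0 l * M^T l j); last by [].
  by apply: eq_bigr => l _; rewrite !mxE.
pose y := fun i => \sum_l K k0 l * (enum_val l == i)%:R.
exists y; split; [|split].
- exists (enum_val l0); rewrite /y (bigD1 l0) //= eqxx mulr1 big1 ?addr0 // => l /negbTE h.
  by rewrite (inj_eq enum_val_inj) h mulr0.
- move=> i iJ; rewrite /y big1 // => l _.
  have : enum_val l \in J by apply: enum_valP.
  by case: eqP => [->|]; rewrite ?(negbTE iJ) // mulr0.
- move=> j; apply: (eq_trans _ (KM j)); rewrite /y.
  under eq_bigr do rewrite mulr_suml.
  rewrite exchange_big; apply: eq_bigr => l _.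
  rewrite (bigD1 (enum_val l)) //= eqxx mulr1 big1 ?addr0 // => i /negbTE.
  by rewrite eq_sym => ->; rewrite mulr0 mul0r.
Qed.


Lemma dep_poly (y : 'I_m -> R) : (exists i, y i != 0) ->
  (\sum_i y i *: Pp i) != 0.
Proof.
move=> [i0 yi0]; apply: contra yi0 => /eqP h.
have := congr1 (fun p : {poly R} => p`_(i0.+1)) h; rewrite coef0 /= coef_sum => <-.
rewrite (bigD1 i0) //= big1 ?addr0.
  by rewrite coefZ /Pp coefD coefC coefXn eqxx /= add0r mulr1.
move=> i /negbTE hi; rewrite coefZ /Pp coefD coefC coefXn /= add0r eqSS.
have h2 : (nat_of_ord i0 == nat_of_ord i) = false by rewrite eq_sym; exact: hi.
by rewrite h2 mulr0.
Qed.

Lemma dep_eval (J : {set 'I_m}) (y : 'I_m -> R) e (x0 : 'rV[R]_n) :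
  (forall i, i \notin J -> y i = 0) -> (forall j, \sum_i y i * A j i = 0) ->
  (forall i, i \in J -> lin A i x0 = beps b e i) ->
  (\sum_i y i *: Pp i).[e] = 0.
Proof.
move=> yJ yA hx; rewrite horner_sum.
transitivity (\sum_i y i * lin A i x0).
  apply: eq_bigr => i _; rewrite hornerZ Pp_horner.
  by case: (boolP (i \in J)) => [/hx ->|/yJ ->] //; rewrite !mul0r.
under eq_bigr do rewrite lin_sum mulr_sumr.
rewrite exchange_big big1 // => j _.
transitivity (x0 0 j * \sum_i y i * A j i); last by rewrite yA mulr0.
rewrite mulr_sumr; apply: eq_bigr => i _; ring.
Qed.

Definition GP (J : {set 'I_m}) (d : R) := forall e, 0 < e -> e < d ->
  ~ contains_affine (fun x => forall i, i \in J -> bdH A b e i x) (maxn (n.+1 - #|J|) 0).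

Lemma GP_ex J : exists d, 0 < d /\ GP J d.
Proof.
case: (classic (exists y : 'I_m -> R, (exists i, y i != 0) /\ (forall i, i \notin J -> y i = 0) /\
    forall j, \sum_i y i * A j i = 0)).
  move=> [y [yn0 [yJ yA]]].
  have [d [d0 Hd]] := @no_root_near0 R _ (dep_poly yn0).
  exists d; split => // e e0 ed [x0 [V [_ HV]]].
  have := Hd e e0 ed; rewrite rootE (dep_eval (x0:=x0) yJ yA) ?eqxx //.
  by move=> i iJ; have := HV 0 i iJ; rewrite mul0mx addr0.
move=> hn; exists 1; split => // e _ _ /dep_of_affine; exact: hn.
Qed.

Definition sJ (J : {set 'I_m}) : seq (('I_n -> R) * {poly R}) :=
  List.app (List.flat_map (fun i => [:: ((fun j => A j i), Pp i); ((fun j => - A j i), - Pp i)]) (enum J))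
    (List.map (fun i => ((fun j => A j i), Pp i)) (enum 'I_m)).

Lemma dot_lin_row i (x : 'rV[R]_n) : dot (fun j => x 0 j) (fun j => A j i) = lin A i x.
Proof. by rewrite lin_sum. Qed.

Lemma dotN k (x c : 'I_k -> R) : dot x (fun j => - c j) = - dot x c.
Proof. by rewrite /dot -sumrN; apply: eq_bigr => j _; rewrite mulrN. Qed.

Lemma face_iff e J : in_face_family A b e J <-> (J != set0 /\ exists xf, satl e xf (sJ J)).
Proof.
split.
  move=> [J0 [x hx]]; split => //.
  have /set0Pn [i0 i0J] := J0; have [_ hK] := hx i0 i0J.
  exists (fun j => x 0 j) => k /List.in_app_iff [].
    move=> /List.in_flat_map [i [/In_mem]]; rewrite mem_enum => iJ.
    have [h1 _] := hx i iJ; move: h1; rewrite /bdH => h1.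
    move=> /= [<-|[<-|[]]] /=; first by rewrite dot_lin_row h1 Pp_horner.
    by rewrite dotN dot_lin_row hornerN Pp_horner h1.
  move=> /List.in_map_iff [i [<- _]] /=.
  by rewrite dot_lin_row Pp_horner; apply: hK.
move=> [J0 [xf hs]]; split => //.
pose x : 'rV[R]_n := \row_j xf j.
have lx : forall i, lin A i x = dot xf (fun j => A j i).
  by move=> i; rewrite lin_sum /dot; apply: eq_bigr => j _; rewrite mxE.
have hK : Keps A b e x.
  move=> i; rewrite lx -Pp_horner; apply: (hs (_, _)); apply: List.in_or_app; right.
  by apply: (List.in_map (fun i => ((fun j => A j i), Pp i))); apply/In_mem; rewrite mem_enum.
exists x => i iJ; split => //; rewrite /bdH; apply/le_anti/andP; split; first exact: hK.
have hin : List.In i (enum J) by apply/In_mem; rewrite mem_enum.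
have hk : List.In ((fun j => - A j i), - Pp i) (sJ J).
  apply: List.in_or_app; left; apply/List.in_flat_map; exists i; split => //=.
  by right; left.
have := hs _ hk.
by rewrite /= dotN hornerN Pp_horner lerN2 lx.
Qed.

Lemma face_evc J : evc (fun e => in_face_family A b e J).
Proof.
apply: (@evc_ext R (fun e => J != set0 /\ exists xf, satl e xf (sJ J))).
  by move=> e; rewrite face_iff.
apply: evc_and; last exact: fm_evc.
by exists 1; split.
Qed.

End Main.

Definition pb (P : Prop) : bool := if excluded_middle_informative P then true else false.
Lemma pbP (P : Prop) : pb P <-> P.
Proof. by rewrite /pb; case: excluded_middle_informative. Qed.

Unset Implicit Arguments.
Unset Strict Implicit.

Theorem lemma1 (R : realType) (n m : nat) (A : 'M[R]_(n, m)) (b : 'cV[R]_m) :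
  (0 < n)%N -> (0 < m)%N ->
  (forall i : 'I_m, col i A != 0) ->
  (exists x : 'rV[R]_n, forall i : 'I_m, lin A i x <= b i 0) ->
  exists delta : R, 0 < delta /\
    (forall eps : R, 0 < eps -> eps < delta ->
       general_position (fun i => bdH A b eps i)) /\
    exists F0 : {set {set 'I_m}},
      (forall eps : R, 0 < eps -> eps < delta ->
         forall J : {set 'I_m}, J \in F0 <-> in_face_family A b eps J) /\
      simplicial_complex F0.
Proof.
move=> _ _ _ _.
have [d1 [d10 H1]] := @fin_delta R _ (GP A b) (fun J d d' d'0 le h e e0 ed => h e e0 (lt_le_trans ed le)) (GP_ex A b).
pose G := fun J (d : R) => forall e1 e2, 0 < e1 -> e1 < d -> 0 < e2 -> e2 < d ->
   in_face_family A b e1 J -> in_face_family A b e2 J.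
have [d2 [d20 H2]] : exists d, 0 < d /\ forall J, G J d.
  apply: (@fin_delta R _ G).
    move=> J d d' _ le h e1 e2 ? ? ? ?; apply: h => //; exact: lt_le_trans le.
  by move=> J; apply: face_evc.
pose delta := Num.min d1 d2.
have dp : 0 < delta by rewrite lt_min d10 d20.
exists delta; split => //; split.
  move=> eps e0 ed [J hJ]; apply: (H1 J eps e0) => //.
  by apply: lt_le_trans ed _; rewrite ge_min lexx.
pose e0 := delta / 2.
have e00 : 0 < e0 by rewrite divr_gt0.
have e0d : e0 < delta by rewrite ltr_pdivrMr // ltr_pMr // ltr1n.
have e0d2 : e0 < d2 by apply: lt_le_trans e0d _; rewrite ge_min lexx orbT.
exists [set J | pb (in_face_family A b e0 J)]; split.
  move=> eps ep ed J; rewrite inE pbP.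
  have ed2 : eps < d2 by apply: lt_le_trans ed _; rewrite ge_min lexx orbT.
  by split; apply: H2.
move=> J; rewrite inE pbP => -[J0 [x hx]]; split => // J' sub J'0.
rewrite inE pbP; split => //; exists x => i iJ'; apply: hx.
exact: (subsetP sub).
Qed.
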